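(* For every $n\ge1$, the set of integer posets on $[n]$, ordered by the weak order on integer relations, is a lattice.
   Context: An integer relation of size $n$ is a reflexive binary relation $R$ on $[n]=\{1,\dots,n\}$. Its increasing part is $\mathrm{Inc}(R)=\{(a,b)\in R: a<b\}$ and its decreasing part is $\mathrm{Dec}(R)=\{(b,a)\in R: a<b\}$. The weak order on integer relations: $R\le S$ iff $\mathrm{Inc}(S)\subseteq\mathrm{Inc}(R)$ and $\mathrm{Dec}(R)\subseteq\mathrm{Dec}(S)$. An integer poset is an integer relation that is antisymmetric and transitive. *)

(* Defs.v *)
From mathcomp Require Import all_boot all_order.
Set Implicit Arguments. Unset Strict Implicit. Unset Printing Implicit Defensive.

(* The ground set [n] = {1,...,n} is modelled by 'I_n = {0,...,n-1}
   (order-preserving shift by one). An integer relation is a finite set of pairs. *)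

Definition int_rel (n : nat) := {set 'I_n * 'I_n}.

Definition reflexive_rel n (R : int_rel n) : bool := [forall i, (i, i) \in R].

Definition Inc n (R : int_rel n) : {set 'I_n * 'I_n} :=
  [set p in R | (p.1 < p.2)%N].
Definition Dec n (R : int_rel n) : {set 'I_n * 'I_n} :=
  [set p in R | (p.2 < p.1)%N].

Definition is_int_rel n (R : int_rel n) : bool := reflexive_rel R.

Definition antisym_rel n (R : int_rel n) : bool :=
  [forall a, forall b, ((a, b) \in R) && ((b, a) \in R) ==> (a == b)].
Definition trans_rel n (R : int_rel n) : bool :=
  [forall a, forall b, forall c, ((a, b) \in R) && ((b, c) \in R) ==> ((a, c) \in R)].

Definition int_poset n (R : int_rel n) : bool :=
  [&& is_int_rel R, antisym_rel R & trans_rel R].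

Definition weak_le n (R S : int_rel n) : bool :=
  (Inc S \subset Inc R) && (Dec R \subset Dec S).

Definition is_join n (P Q J : int_rel n) : Prop :=
  [/\ int_poset J, weak_le P J, weak_le Q J &
      forall K, int_poset K -> weak_le P K -> weak_le Q K -> weak_le J K].
Definition is_meet n (P Q M : int_rel n) : Prop :=
  [/\ int_poset M, weak_le M P, weak_le M Q &
      forall K, int_poset K -> weak_le K P -> weak_le K Q -> weak_le K M].

Definition int_posets_lattice (n : nat) : Prop :=
  forall P Q : int_rel n, int_poset P -> int_poset Q ->
    (exists J, is_join P Q J) /\ (exists M, is_meet P Q M).

(* Main.v *)
Require Import Defs.
From mathcomp Require Import all_boot all_order.
From Stdlib Require Import Classical ClassicalEpsilon.
Set Implicit Arguments. Unset Strict Implicit. Unset Printing Implicit Defensive.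

Definition bp (P : Prop) : bool := if excluded_middle_informative P then true else false.
Lemma bpP (P : Prop) : reflect P (bp P).
Proof. rewrite /bp; case: excluded_middle_informative => h; constructor; done. Qed.

Section Lat.
Variable n : nat.
Local Notation T := 'I_n.

Lemma weak_leP (R S : int_rel n) :
  weak_le R S <-> (forall a b : T, (a < b)%N -> (a,b) \in S -> (a,b) \in R) /\
                  (forall a b : T, (b < a)%N -> (a,b) \in R -> (a,b) \in S).
Proof.
rewrite /weak_le; split.
- case/andP => /subsetP h1 /subsetP h2; split => a b ab H.
  + by have := h1 (a,b); rewrite !inE /= H ab => /(_ isT) /andP [].
  + by have := h2 (a,b); rewrite !inE /= H ab => /(_ isT) /andP [].
- case=> h1 h2; apply/andP; split; apply/subsetP => -[a b]; rewrite !inE /= => /andP [H ab]; rewrite ab andbT.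
  + exact: h1.
  + exact: h2.
Qed.

Record posetp (R : int_rel n) : Prop := PosetP {
  prefl : forall a, (a,a) \in R;
  pantis : forall a b, (a,b) \in R -> (b,a) \in R -> a = b;
  ptrans : forall a b c, (a,b) \in R -> (b,c) \in R -> (a,c) \in R }.
Arguments prefl {R} _ a.
Arguments pantis {R} _ {a b}.
Arguments ptrans {R} _ {a b c}.

Lemma posetP R : int_poset R <-> posetp R.
Proof.
rewrite /int_poset /is_int_rel /reflexive_rel /antisym_rel /trans_rel; split.
- case/and3P => /forallP h1 /forallP h2 /forallP h3; split.
  + by move=> a; exact: h1.
  + move=> a b H1 H2; move: (h2 a) => /forallP /(_ b) /implyP; rewrite H1 H2 => /(_ isT) /eqP //.
  + move=> a b c H1 H2; move: (h3 a) => /forallP /(_ b) /forallP /(_ c) /implyP; rewrite H1 H2; exact.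
- case=> h1 h2 h3; apply/and3P; split.
  + by apply/forallP.
  + apply/forallP => a; apply/forallP => b; apply/implyP => /andP [H1 H2]; apply/eqP; exact: h2.
  + apply/forallP => a; apply/forallP => b; apply/forallP => c; apply/implyP => /andP [H1 H2]; exact: h3 H1 H2.
Qed.

Section Meet.
Variables P Q : int_rel n.
Hypothesis HP : posetp P.
Hypothesis HQ : posetp Q.

Definition I0p (x y : T) : Prop := (x < y)%N /\ ((x,y) \in P \/ (x,y) \in Q).

Inductive Itc : T -> T -> Prop :=
| Itc_base x y : I0p x y -> Itc x y
| Itc_step x y z : Itc x y -> Itc y z -> Itc x z.

Lemma Itc_lt x y : Itc x y -> (x < y)%N.
Proof. elim=> [a b [] //| a b c _ h1 _ h2]; exact: ltn_trans h1 h2. Qed.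

Record goodpair (E : T -> T -> Prop) (b a : T) : Prop := GoodPair {
  g_lt : (a < b)%N; g_P : (b,a) \in P; g_Q : (b,a) \in Q; g_nI : ~ Itc a b;
  g_c2 : forall x : T, (a < x)%N -> (x < b)%N -> Itc x b -> E x a;
  g_c3 : forall y : T, (a < y)%N -> (y < b)%N -> Itc a y -> E b y;
  g_c4 : forall x : T, (x < a)%N -> Itc x b -> Itc x a;
  g_c5 : forall y : T, (b < y)%N -> Itc a y -> Itc b y }.
Definition Good E := forall b a, E b a -> goodpair E b a.
Definition Dp b a := exists E, Good E /\ E b a.

Lemma Good_Dp : Good Dp.
Proof.
move=> b a [E [GE Eba]]; case: (GE b a Eba) => h1 h2 h3 h4 h5 h6 h7 h8; split => //.
- move=> x ax xb Ix; exists E; split => //; exact: h5.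
- move=> y ay yb Iy; exists E; split => //; exact: h6.
Qed.

Lemma ord_eq (x y : T) : (x : nat) = y -> x = y.
Proof. exact: val_inj. Qed.

Lemma Dp_trans c b a : Dp c b -> Dp b a -> Dp c a.
Proof.
move=> Hcb Hba.
pose E' x y := Dp x y \/ exists m, Dp x m /\ Dp m y.
suff GE' : Good E' by exists E'; split => //; right; exists b.
move=> x y [Hxy | [m [Hxm Hmy]]].
- case: (Good_Dp Hxy) => h1 h2 h3 h4 h5 h6 h7 h8; split => //.
  + by move=> z ? ? ?; left; exact: h5.
  + by move=> z ? ? ?; left; exact: h6.
- case: (Good_Dp Hxm) => l1 p1 q1 n1 c21 c31 c41 c51.
  case: (Good_Dp Hmy) => l2 p2 q2 n2 c22 c32 c42 c52.
  split.
  + exact: ltn_trans l2 l1.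
  + exact: (ptrans HP p1 p2).
  + exact: (ptrans HQ q1 q2).
  + move=> Iyx; apply: n2; exact: c41 Iyx.
  + move=> z yz zx Izx.
    case: (ltngtP z m) => [zm|mz|/ord_eq zm].
    * by left; apply: c22 => //; exact: c41.
    * by right; exists m; split => //; exact: c21.
    * by left; rewrite zm.
  + move=> z yz zx Iyz.
    case: (ltngtP z m) => [zm|mz|/ord_eq zm].
    * by right; exists m; split => //; exact: c32.
    * by left; apply: c31 => //; exact: c52.
    * by left; rewrite zm.
  + move=> z zy Izx; apply: c42 => //; apply: c41 => //; exact: ltn_trans zy l2.
  + move=> z xz Iyz; apply: c51 => //; apply: c52 => //; exact: ltn_trans l1 xz.
Qed.

Section K.
Variable K : int_rel n.
Hypothesis HK : posetp K.
Hypothesis KP1 : forall a b : T, (a<b)%N -> (a,b) \in P -> (a,b) \in K.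
Hypothesis KQ1 : forall a b : T, (a<b)%N -> (a,b) \in Q -> (a,b) \in K.
Hypothesis KP2 : forall a b : T, (b<a)%N -> (a,b) \in K -> (a,b) \in P.
Hypothesis KQ2 : forall a b : T, (b<a)%N -> (a,b) \in K -> (a,b) \in Q.

Lemma Itc_K x y : Itc x y -> (x,y) \in K.
Proof.
elim=> [a b [ab [Hp|Hq]] | a b c _ h1 _ h2]; [exact: KP1|exact: KQ1| exact: (ptrans HK h1 h2)].
Qed.

Lemma lemA x b : Itc x b -> forall a, (b,a) \in K -> (a < b)%N -> (x < a)%N -> Itc x a.
Proof.
elim=> {x b} [x b [xb [Hp|Hq]] | x z b Ixz IH1 Izb IH2] a Kba ab xa.
- apply: Itc_base; split => //; left; exact: (ptrans HP Hp (KP2 ab Kba)).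
- apply: Itc_base; split => //; right; exact: (ptrans HQ Hq (KQ2 ab Kba)).
- case: (ltngtP z a) => [za|az|/ord_eq za].
  + exact: Itc_step Ixz (IH2 a Kba ab za).
  + apply: (IH1 a) => //; exact: (ptrans HK (Itc_K Izb) Kba).
  + rewrite za in Izb; have e := pantis HK (Itc_K Izb) Kba.
    by rewrite e ltnn in ab.
Qed.

Lemma lemB a y : Itc a y -> forall b, (b,a) \in K -> (a < b)%N -> (b < y)%N -> Itc b y.
Proof.
elim=> {a y} [a y [ay [Hp|Hq]] | a z y Iaz IH1 Izy IH2] b Kba ab bY.
- apply: Itc_base; split => //; left; exact: (ptrans HP (KP2 ab Kba) Hp).
- apply: Itc_base; split => //; right; exact: (ptrans HQ (KQ2 ab Kba) Hq).
- case: (ltngtP z b) => [zb|bz|/ord_eq zb].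
  + apply: (IH2 b) => //; exact: (ptrans HK Kba (Itc_K Iaz)).
  + exact: Itc_step (IH1 b Kba ab bz) Izy.
  + by rewrite -zb.
Qed.

Lemma Good_K : Good (fun b a => (b,a) \in K /\ (a < b)%N).
Proof.
move=> b a [Kba ab]; split => //.
- exact: KP2.
- exact: KQ2.
- move=> Iab; have e := pantis HK (Itc_K Iab) Kba; by rewrite e ltnn in ab.
- move=> x ax xb Ixb; split => //; exact: (ptrans HK (Itc_K Ixb) Kba).
- move=> y ay yb Iay; split => //; exact: (ptrans HK Kba (Itc_K Iay)).
- move=> x xa Ixb; exact (lemA Ixb Kba ab xa).
- move=> y bY Iay; exact (lemB Iay Kba ab bY).
Qed.
End K.

Definition Mset : int_rel n := [set p : T * T | bp (p.1 = p.2 \/ Itc p.1 p.2 \/ Dp p.1 p.2)].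

Lemma inM a b : (a,b) \in Mset <-> a = b \/ Itc a b \/ Dp a b.
Proof. rewrite inE /=; split => [/bpP //|H]; exact/bpP. Qed.

Lemma M_poset : posetp Mset.
Proof.
split.
- by move=> a; apply/inM; left.
- move=> a b /inM [->//|[Iab|Dab]] /inM [->//|[Iba|Dba]].
  + by have := ltn_trans (Itc_lt Iab) (Itc_lt Iba); rewrite ltnn.
  + by case: (g_nI (Good_Dp Dba)).
  + by case: (g_nI (Good_Dp Dab)).
  + by have := ltn_trans (g_lt (Good_Dp Dab)) (g_lt (Good_Dp Dba)); rewrite ltnn.
- move=> a b c /inM [-> //|[Iab|Dab]]; move=> /inM [eb|[Ibc|Dbc]]; try by rewrite -eb; apply/inM; right; first [by left | by right].
  + by apply/inM; right; left; exact: Itc_step Iab Ibc.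
  + have G := Good_Dp Dbc; apply/inM.
    case: (ltngtP a c) => [ac|ca|/ord_eq ac].
    * by right; left; exact (g_c4 G ac Iab).
    * by right; right; exact (g_c2 G ca (Itc_lt Iab) Iab).
    * by left.
  + have G := Good_Dp Dab; apply/inM.
    case: (ltngtP c a) => [ca|ac|/ord_eq ca].
    * by right; right; exact (g_c3 G (Itc_lt Ibc) ca Ibc).
    * by right; left; exact (g_c5 G ac Ibc).
    * by left.
  + by apply/inM; right; right; exact: Dp_trans Dab Dbc.
Qed.

Lemma meet_exists : exists M, is_meet P Q M.
Proof.
exists Mset; split.
- exact/posetP/M_poset.
- apply/weak_leP; split.
  + by move=> a b ab H; apply/inM; right; left; apply: Itc_base; split => //; left.
  + move=> a b ba /inM [e|[I|D]].
    * by rewrite e ltnn in ba.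
    * by have := ltn_trans ba (Itc_lt I); rewrite ltnn.
    * exact (g_P (Good_Dp D)).
- apply/weak_leP; split.
  + by move=> a b ab H; apply/inM; right; left; apply: Itc_base; split => //; right.
  + move=> a b ba /inM [e|[I|D]].
    * by rewrite e ltnn in ba.
    * by have := ltn_trans ba (Itc_lt I); rewrite ltnn.
    * exact (g_Q (Good_Dp D)).
- move=> K /posetP HK /weak_leP [KP1 KP2] /weak_leP [KQ1 KQ2].
  apply/weak_leP; split.
  + move=> a b ab /inM [e|[I|D]].
    * by rewrite e ltnn in ab.
    * exact (Itc_K HK KP1 KQ1 I).
    * by have := ltn_trans ab (g_lt (Good_Dp D)); rewrite ltnn.
  + move=> a b ba Kab; apply/inM; right; right.
    exists (fun b a => (b,a) \in K /\ (a < b)%N); split => //.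
    exact (Good_K HK KP1 KQ1 KP2 KQ2).
Qed.
End Meet.

Definition tr (R : int_rel n) : int_rel n := [set p : T * T | (p.2, p.1) \in R].

Lemma trK R : tr (tr R) = R.
Proof. by apply/setP => -[a b]; rewrite !inE. Qed.

Lemma tr_poset R : posetp R -> posetp (tr R).
Proof.
case=> h1 h2 h3; split.
- by move=> a; rewrite inE.
- move=> a b; rewrite !inE /= => H1 H2; symmetry; exact: h2 H1 H2.
- move=> a b c; rewrite !inE /= => H1 H2; exact: h3 H2 H1.
Qed.

Lemma tr_le R S : weak_le R S -> weak_le (tr S) (tr R).
Proof.
move/weak_leP=> [h1 h2]; apply/weak_leP; split => a b ab; rewrite !inE /=.
- exact: h2.
- exact: h1.
Qed.
End Lat.

Theorem theorem1 (n : nat) : (1 <= n)%N -> int_posets_lattice n.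
Proof.
move=> _ P Q /posetP HP /posetP HQ; split; last exact: meet_exists.
have [M [pM MP MQ Mmax]] := meet_exists (tr_poset HP) (tr_poset HQ).
exists (tr M); split.
- apply/posetP; apply: tr_poset; exact/posetP.
- by rewrite -[P]trK; apply: tr_le.
- by rewrite -[Q]trK; apply: tr_le.
- move=> K /posetP pK PK QK; rewrite -[K]trK; apply: tr_le; apply: Mmax.
  + apply/posetP; exact: tr_poset.
  + exact: tr_le.
  + exact: tr_le.
Qed.
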